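(* Let $\mathbb{F}\in\{\mathbb{R},\mathbb{C}\}$, $N\ge2$, and let $\mathcal{P}(M,N)$ be the set of Parseval frames for $\mathbb{F}^N$ with $M$ vectors. Suppose an equiangular Parseval frame exists in $\mathcal{P}(M,N)$. Then $\Phi\in\mathcal{P}(M,N)$ maximizes $V_2$ over $\mathcal{P}(M,N)$ if and only if $\Phi$ is an equiangular Parseval frame.
   Context: A Parseval frame for $\mathbb{F}^N$ is a family $\{\varphi_i\}_{i=1}^M\subseteq\mathbb{F}^N$ whose $N\times M$ matrix $\Phi$ (columns $\varphi_i$) satisfies $\Phi\Phi^*=I$; it is equiangular if all $\|\varphi_i\|$ are equal and all $|\langle\varphi_i,\varphi_j\rangle|$, $i\neq j$, are equal. For $K\subseteq[M]$, $\Phi_K$ is the submatrix of columns indexed by $K$; $v_k(F)=\sqrt{\det(F^*F)}$; and $V_k(\Phi)=\sum_{|K|=k}v_k(\Phi_K)$. *)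

(* Defs.v *)
From HB Require Import structures.
From mathcomp Require Import all_boot all_order all_algebra.
From mathcomp Require Import reals complex.
Set Implicit Arguments. Unset Strict Implicit. Unset Printing Implicit Defensive.
Import Order.TTheory GRing.Theory Num.Theory.
Local Open Scope ring_scope.

Section Generic.
Variable F : numFieldType.
Variable adj : forall m n, 'M[F]_(m, n) -> 'M[F]_(n, m).
Variable sq : F -> F.

(* Parseval frame of M vectors for F^N: columns of Phi, Phi Phi^* = I *)
Definition gparseval (N M : nat) (Phi : 'M[F]_(N, M)) : Prop :=
  Phi *m adj Phi = 1%:M.

Definition ginner (N M : nat) (Phi : 'M[F]_(N, M)) (i j : 'I_M) : F :=
  (adj (col j Phi) *m col i Phi) 0 0.

Definition gnorm (N M : nat) (Phi : 'M[F]_(N, M)) (i : 'I_M) : F :=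
  sq (ginner Phi i i).

Definition gequiangular (N M : nat) (Phi : 'M[F]_(N, M)) : Prop :=
  (forall i j : 'I_M, gnorm Phi i = gnorm Phi j) /\
  (forall i j k l : 'I_M, i != j -> k != l ->
      `|ginner Phi i j| = `|ginner Phi k l|).

(* Phi_K : submatrix of the columns indexed by K (in increasing order) *)
Definition subcols (N M : nat) (Phi : 'M[F]_(N, M)) (K : {set 'I_M})
  : 'M[F]_(N, #|K|) :=
  \matrix_(i < N, j < #|K|) Phi i (enum_val j).

Definition gvol (N k : nat) (G : 'M[F]_(N, k)) : F :=
  sq (\det (adj G *m G)).

Definition gV (k N M : nat) (Phi : 'M[F]_(N, M)) : F :=
  \sum_(K : {set 'I_M} | #|K| == k) gvol (subcols Phi K).
End Generic.

Definition radj (R : realType) m n (A : 'M[R]_(m, n)) : 'M[R]_(n, m) := A^T.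
Definition rsqrt (R : realType) (x : R) : R := Num.sqrt x.

Definition cadj (R : realType) m n (A : 'M[R[i]]_(m, n)) : 'M[R[i]]_(n, m) :=
  (map_mx Num.conj A)^T.
Definition csqrt (R : realType) (x : R[i]) : R[i] := sqrtC x.

Definition cor11_stmt (F : numFieldType)
  (adj : forall m n, 'M[F]_(m, n) -> 'M[F]_(n, m)) (sq : F -> F)
  (M N : nat) : Prop :=
  (exists Psi : 'M[F]_(N, M), gparseval adj Psi /\ gequiangular adj sq Psi) ->
  forall Phi : 'M[F]_(N, M), gparseval adj Phi ->
    ((forall Psi : 'M[F]_(N, M), gparseval adj Psi ->
        gV adj sq 2 Psi <= gV adj sq 2 Phi)
     <-> gequiangular adj sq Phi).

(* Main.v *)
Require Import Defs.
From mathcomp Require Import all_boot all_order all_algebra.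
From mathcomp Require Import reals complex.
From mathcomp Require Import ring.
Import Order.TTheory GRing.Theory Num.Theory.
Local Open Scope ring_scope.
Import Order.TTheory GRing.Theory Num.Theory.
Local Open Scope ring_scope.

Lemma det22 (F : comRingType) (A : 'M[F]_2) : \det A = A 0 0 * A 1 1 - A 0 1 * A 1 0.
Proof.
rewrite (expand_det_row _ 0) !big_ord_recl big_ord0 addr0 /cofactor.
rewrite !det_mx11 !mxE /= expr0 expr1 !mul1r mulN1r mulrN.
by congr (_ * A _ _ - _ * A _ _); try congr (A _ _); apply: val_inj.
Qed.

Lemma det22gen (F : comRingType) n (A : 'M[F]_n) (p q : 'I_n) :
  n = 2%N -> p != q -> \det A = A p p * A q q - A p q * A q p.
Proof.
move=> e; subst n; rewrite det22.
case: p => [[|[|p]] hp] //; case: q => [[|[|q]] hq] //= _.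
- have -> : Ordinal hp = 0 by apply: val_inj.
  by have -> : Ordinal hq = 1 by apply: val_inj.
- have -> : Ordinal hp = 1 by apply: val_inj.
  have -> : Ordinal hq = 0 by apply: val_inj.
  ring.
Qed.

Lemma pair_sum (T : finType) (V : nmodType) (i : T) (f : {set T} -> V) :
  \sum_(K : {set T} | (#|K| == 2%N) && (i \in K)) f K =
  \sum_(j | j != i) f [set i; j].
Proof.
pose h' (K : {set T}) := odflt i [pick j in K :\ i].
rewrite (reindex_onto (fun j => [set i; j]) h').
  apply: eq_bigl => j.
  case: (eqVneq j i) => [->|ji].
    by rewrite setUid cards1.
  rewrite cards2 (eq_sym i j) ji set21 /= /h'.
  have -> : [set i; j] :\ i = [set j] by rewrite setU1K // in_set1 eq_sym.
  case: pickP => [y /=|].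
    by rewrite in_set1 => /eqP ->; rewrite eqxx.
  by move/(_ j); rewrite in_set1 eqxx.
move=> K /andP [cK iK].
have : #|K :\ i| == 1%N.
  by move: cK; rewrite (cardsD1 i) iK add1n eqSS.
case/cards1P => j Kj.
rewrite /h' Kj.
case: pickP => [y /=|].
  rewrite in_set1 => /eqP ->.
  by rewrite -Kj setD1K.
by move/(_ j); rewrite in_set1 eqxx.
Qed.

Lemma sum_ne (T : finType) (V : nmodType) (i : T) (x : V) :
  \sum_(j | j != i) x = x *+ #|T|.-1.
Proof. by rewrite -(cardC1 i) -sumr_const. Qed.

Lemma sum_constP (T : finType) (V : nmodType) (P : pred T) (x : V) :
  \sum_(j | P j) x = x *+ #|P|.
Proof. by rewrite -sumr_const. Qed.
Section Gen.
Variable F : numFieldType.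
Variable c : {rmorphism F -> F}.
Hypothesis cK : involutive c.
Hypothesis cnorm : forall x : F, `|x| ^+ 2 = x * c x.
Variable adj : forall m n, 'M[F]_(m, n) -> 'M[F]_(n, m).
Hypothesis adjE : forall m n (A : 'M[F]_(m, n)), adj _ _ A = (map_mx c A)^T.
Variable sq : F -> F.
Hypothesis sq_ge0 : forall x, 0 <= x -> 0 <= sq x.
Hypothesis sqK : forall x, 0 <= x -> sq x ^+ 2 = x.

Variables (N M : nat).
Implicit Types (Phi : 'M[F]_(N, M)).

Definition G Phi := adj _ _ Phi *m Phi.

Lemma GE Phi i j : G Phi i j = \sum_k c (Phi k i) * Phi k j.
Proof. by rewrite /G adjE !mxE; apply: eq_bigr => k _; rewrite !mxE. Qed.

Lemma innerE Phi i j : ginner adj Phi i j = G Phi j i.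
Proof.
rewrite /ginner GE adjE !mxE; apply: eq_bigr => k _; rewrite !mxE.
by [].
Qed.

Lemma G_herm Phi i j : c (G Phi i j) = G Phi j i.
Proof.
rewrite !GE rmorph_sum; apply: eq_bigr => k _.
by rewrite rmorphM cK mulrC.
Qed.

Lemma normG2 Phi i j : `|G Phi i j| ^+ 2 = G Phi i j * G Phi j i.
Proof. by rewrite cnorm G_herm. Qed.

Lemma cx_ge0 (x : F) : 0 <= c x * x.
Proof. by rewrite mulrC -cnorm exprn_ge0. Qed.

Lemma Gii_ge0 Phi i : 0 <= G Phi i i.
Proof. by rewrite GE; apply: sumr_ge0 => k _; apply: cx_ge0. Qed.

Definition X Phi i j := G Phi i i * G Phi j j - G Phi i j * G Phi j i.

Lemma X_sym Phi i j : X Phi i j = X Phi j i.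
Proof. by rewrite /X; ring. Qed.

Lemma X_ge0 Phi i j : 0 <= X Phi i j.
Proof.
pose u k := Phi k i; pose v k := Phi k j.
pose w k l := u k * v l - u l * v k.
have e : forall k l, w k l * c (w k l) =
   (c (u k) * u k) * (c (v l) * v l) + (c (u l) * u l) * (c (v k) * v k)
   - (c (u k) * v k) * (c (v l) * u l) - (c (v k) * u k) * (c (u l) * v l).
  by move=> k l; rewrite /w rmorphB !rmorphM; ring.
have h : X Phi i j * 2%:R = \sum_k \sum_l w k l * c (w k l).
  under eq_bigr do under eq_bigr do rewrite e.
  under eq_bigr do rewrite !sumrB big_split /=.
  rewrite !sumrB big_split /=.
  rewrite /X !GE !big_distrlr /=.
  have -> : \sum_k \sum_l (c (u l) * u l) * (c (v k) * v k) =
            \sum_k \sum_l (c (u k) * u k) * (c (v l) * v l).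
    by rewrite exchange_big.
  have -> : \sum_k \sum_l (c (v k) * u k) * (c (u l) * v l) =
            \sum_k \sum_l (c (u k) * v k) * (c (v l) * u l).
    rewrite exchange_big; apply: eq_bigr => k _; apply: eq_bigr => l _.
    by rewrite mulrC.
  rewrite /u /v; ring.
have : 0 <= X Phi i j * 2%:R.
  rewrite h; apply: sumr_ge0 => k _; apply: sumr_ge0 => l _.
  by rewrite mulrC cx_ge0.
by rewrite pmulr_lge0 // ltr0n.
Qed.

Lemma GG Phi : gparseval adj Phi -> G Phi *m G Phi = G Phi.
Proof. by move=> hP; rewrite /G mulmxA -(mulmxA _ Phi) hP mulmx1. Qed.

Lemma rowG Phi i : gparseval adj Phi -> \sum_j G Phi i j * G Phi j i = G Phi i i.
Proof. by move=> hP; rewrite -{3}(GG _ hP) mxE. Qed.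

Lemma trG Phi : gparseval adj Phi -> \sum_i G Phi i i = N%:R.
Proof.
move=> hP; have := mxtrace_mulC (adj _ _ Phi) Phi.
by rewrite hP mxtrace1.
Qed.

Lemma rowX Phi i : gparseval adj Phi ->
  \sum_(j | j != i) X Phi i j = G Phi i i * (N%:R - 1).
Proof.
move=> hP.
have h1 := trG _ hP; rewrite (bigD1 i) //= in h1.
have h2 := rowG _ i hP; rewrite (bigD1 i) //= in h2.
rewrite /X sumrB -mulr_sumr.
set S1 := \sum_(j | j != i) G Phi j j in h1 *.
set S2 := \sum_(j | j != i) _ in h2 *.
have -> : S1 = N%:R - G Phi i i by rewrite -h1 addrC addrK.
have -> : S2 = G Phi i i - G Phi i i * G Phi i i by rewrite -{1}h2 addrC addrK.
ring.
Qed.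

Definition xK Phi (K : {set 'I_M}) :=
  \det (adj _ _ (subcols Phi K) *m subcols Phi K).

Lemma subG Phi (K : {set 'I_M}) p q :
  (adj _ _ (subcols Phi K) *m subcols Phi K) p q = G Phi (enum_val p) (enum_val q).
Proof.
rewrite GE !mxE; apply: eq_bigr => k _; rewrite adjE !mxE.
by [].
Qed.

Lemma detK Phi i j : i != j -> xK Phi [set i; j] = X Phi i j.
Proof.
move=> ij; set K := [set i; j].
have cardK : #|K| = 2%N by rewrite cards2 ij.
have h0 : (0 < #|K|)%N by rewrite cardK.
have h1 : (1 < #|K|)%N by rewrite cardK.
have pq : Ordinal h0 != Ordinal h1 by [].
rewrite /xK (@det22gen _ _ _ _ _ cardK pq) !subG.
have := enum_valP (Ordinal h0); have := enum_valP (Ordinal h1).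
have : enum_val (Ordinal h0) != enum_val (Ordinal h1).
  by apply: contra pq => /eqP /enum_val_inj ->.
move: (enum_val (Ordinal h0)) (enum_val (Ordinal h1)) => a b.
rewrite !in_set2 => ab.
case/orP => /eqP bE; case/orP => /eqP aE; subst a b.
- by rewrite eqxx in ab.
- by rewrite /X; ring.
- by [].
- by rewrite eqxx in ab.
Qed.

Lemma xK_ge0 Phi (K : {set 'I_M}) : #|K| == 2%N -> 0 <= xK Phi K.
Proof. by case/cards2P => i [j [ij ->]]; rewrite detK // X_ge0. Qed.

Lemma sumx Phi : gparseval adj Phi ->
  (\sum_(K : {set 'I_M} | #|K| == 2%N) xK Phi K) *+ 2 = N%:R * (N%:R - 1).
Proof.
move=> hP.
rewrite -sumrMnl.
have -> : \sum_(K : {set 'I_M} | #|K| == 2%N) xK Phi K *+ 2 =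
          \sum_(K : {set 'I_M} | #|K| == 2%N) \sum_(i in K) xK Phi K.
  by apply: eq_bigr => K /eqP cardK; rewrite sumr_const cardK.
under eq_bigr do rewrite big_mkcond /=.
rewrite exchange_big /=.
under eq_bigr do rewrite -big_mkcondr pair_sum.
rewrite -{1}(trG _ hP) mulr_suml; apply: eq_bigr => i _.
rewrite -(rowX _ i hP); apply: eq_bigr => j ji.
by rewrite detK // eq_sym.
Qed.

Lemma cs (I : finType) (A : pred I) (f : I -> F) :
  \sum_(K | A K) \sum_(L | A L) (f K - f L) ^+ 2 + (\sum_(K | A K) f K) ^+ 2 *+ 2
  = (\sum_(K | A K) f K ^+ 2) *+ (#|A| * 2).
Proof.
set S1 := \sum_(K | A K) f K; set S2 := \sum_(K | A K) f K ^+ 2.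
have inner : forall K, \sum_(L | A L) (f K - f L) ^+ 2 =
   f K ^+ 2 *+ #|A| - (f K * S1) *+ 2 + S2.
  move=> K; under eq_bigr do rewrite sqrrB.
  by rewrite big_split /= sumrB sum_constP sumrMnl mulr_sumr.
under eq_bigr do rewrite inner.
rewrite big_split /= sumrB !sumrMnl -mulr_suml sum_constP -/S1 -/S2.
rewrite mulnC mulrnA expr2; ring.
Qed.

Implicit Types (K L : {set 'I_M}).
Definition s Phi (K : {set 'I_M}) := sq (xK Phi K).
Definition V Phi := \sum_(K : {set 'I_M} | #|K| == 2%N) s Phi K.
Definition D Phi := \sum_(K : {set 'I_M} | #|K| == 2%N)
   \sum_(L : {set 'I_M} | #|L| == 2%N) (s Phi K - s Phi L) ^+ 2.

Lemma gVE Phi : gV adj sq 2 Phi = V Phi.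
Proof. by []. Qed.

Lemma s_ge0 Phi K : #|K| == 2%N -> 0 <= s Phi K.
Proof. by move=> hK; apply: sq_ge0; apply: xK_ge0. Qed.

Lemma s_sq Phi K : #|K| == 2%N -> s Phi K ^+ 2 = xK Phi K.
Proof. by move=> hK; apply: sqK; apply: xK_ge0. Qed.

Lemma V_ge0 Phi : 0 <= V Phi.
Proof. by apply: sumr_ge0 => K hK; apply: s_ge0. Qed.

Lemma term_ge0 Phi K L : #|K| == 2%N -> #|L| == 2%N -> 0 <= (s Phi K - s Phi L) ^+ 2.
Proof.
move=> hK hL; rewrite -realEsqr; apply: rpredB; apply: ger0_real; exact: s_ge0.
Qed.

Lemma D_ge0 Phi : 0 <= D Phi.
Proof.
apply: sumr_ge0 => K hK; apply: sumr_ge0 => L hL; exact: term_ge0.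
Qed.

Lemma key Phi : gparseval adj Phi ->
  D Phi + V Phi ^+ 2 *+ 2 =
  (N%:R * (N%:R - 1)) *+ #|(fun K : {set 'I_M} => #|K| == 2%N)|.
Proof.
move=> hP; rewrite /D /V cs.
have -> : \sum_(K : {set 'I_M} | #|K| == 2%N) s Phi K ^+ 2 =
          \sum_(K : {set 'I_M} | #|K| == 2%N) xK Phi K.
  by apply: eq_bigr => K hK; apply: s_sq.
by rewrite mulnC mulrnA (sumx _ hP).
Qed.

Lemma D0_SE Phi : D Phi = 0 ->
  forall K L : {set 'I_M}, #|K| == 2%N -> #|L| == 2%N -> s Phi K = s Phi L.
Proof.
move=> h K L hK hL.
have h1 := psumr_eq0P (fun K hK => sumr_ge0 _ (fun L hL => term_ge0 Phi _ _ hK hL)) h hK.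
have := psumr_eq0P (fun L hL => term_ge0 Phi _ _ hK hL) h1 hL.
by move/eqP; rewrite sqrf_eq0 subr_eq0 => /eqP.
Qed.

Lemma SE_D0 Phi :
  (forall K L : {set 'I_M}, #|K| == 2%N -> #|L| == 2%N -> s Phi K = s Phi L) ->
  D Phi = 0.
Proof.
move=> h; apply: big1 => K hK; apply: big1 => L hL.
by rewrite (h K L hK hL) subrr expr0n.
Qed.

Definition XE Phi := forall i j k l : 'I_M, i != j -> k != l -> X Phi i j = X Phi k l.

Lemma XE_SE Phi : XE Phi ->
  forall K L : {set 'I_M}, #|K| == 2%N -> #|L| == 2%N -> s Phi K = s Phi L.
Proof.
move=> hX K L /cards2P [i [j [ij ->]]] /cards2P [k [l [kl ->]]].
by rewrite /s !detK // (hX i j k l).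
Qed.

Lemma SE_XE Phi :
  (forall K L : {set 'I_M}, #|K| == 2%N -> #|L| == 2%N -> s Phi K = s Phi L) ->
  XE Phi.
Proof.
move=> hS i j k l ij kl.
rewrite -!detK // -!s_sq ?cards2 ?ij ?kl //.
by rewrite (hS _ [set k; l]) // cards2 ?ij ?kl.
Qed.

Lemma equi_XE Phi : gequiangular adj sq Phi -> XE Phi.
Proof.
move=> [hn hi] i j k l ij kl.
have ha : forall a b, G Phi a a = G Phi b b.
  move=> a b; have := hn a b; rewrite /Defs.gnorm !innerE => e.
  by rewrite -(sqK _ (Gii_ge0 Phi a)) e sqK // Gii_ge0.
have e : forall x y, X Phi x y = G Phi x x * G Phi y y - `|G Phi y x| ^+ 2.
  by move=> x y; rewrite normG2 /X mulrC (mulrC (G Phi y x)).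
have := hi i j k l ij kl; rewrite !innerE => e2.
by rewrite !e e2 (ha i k) (ha j k) (ha l k).
Qed.

Lemma XE_equi Phi : (2 <= N)%N -> gparseval adj Phi -> XE Phi -> gequiangular adj sq Phi.
Proof.
move=> hN hP hX.
have nz : (N%:R - 1 : F) != 0.
  rewrite -(natrB _ (ltnW hN)) pnatr_eq0 -lt0n subn_gt0 //.
have ha : forall a b, G Phi a a = G Phi b b.
  move=> a b; case: (eqVneq a b) => [->//|ab].
  have h1 := rowX _ a hP; have h2 := rowX _ b hP.
  have e1 : \sum_(j | j != a) X Phi a j = X Phi a b *+ #|'I_M|.-1.
    by rewrite -(@sum_ne _ _ a); apply: eq_bigr => j ja; apply: hX; rewrite // eq_sym.
  have e2 : \sum_(j | j != b) X Phi b j = X Phi a b *+ #|'I_M|.-1.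
    by rewrite -(@sum_ne _ _ b); apply: eq_bigr => j jb; apply: hX; rewrite // eq_sym.
  by apply: (mulIf nz); rewrite -h1 -h2 e1 e2.
split.
  by move=> a b; rewrite /Defs.gnorm !innerE (ha a b).
move=> a b k l ab kl; rewrite !innerE.
apply/eqP; rewrite -(eqrXn2 (n:=2)) ?normr_ge0 //; apply/eqP.
have e : forall x y, G Phi y x * G Phi x y = G Phi x x * G Phi y y - X Phi x y.
  by move=> x y; rewrite /X; ring.
by rewrite !normG2 !e (hX a b k l ab kl) (ha a k) (ha b k) (ha l k).
Qed.

Theorem gen_cor11 : (2 <= N)%N -> cor11_stmt adj sq M N.
Proof.
move=> hN [Psi0 [hP0 hE0]] Phi hP.
have D0 : D Psi0 = 0 := SE_D0 _ (XE_SE _ (equi_XE _ hE0)).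
have k0 := key _ hP0; have k := key _ hP.
rewrite D0 add0r in k0.
split.
- move=> hmax; have h := hmax Psi0 hP0; rewrite !gVE in h.
  have hD : D Phi = 0.
    apply/eqP; rewrite eq_le D_ge0 andbT.
    have -> : D Phi = V Psi0 ^+ 2 *+ 2 - V Phi ^+ 2 *+ 2 by rewrite k0 -k addrK.
    rewrite subr_le0 lerMn2r /=.
    by rewrite (ler_sqr : {in Num.nneg &, _}) ?nnegrE ?V_ge0.
  exact: XE_equi _ hN hP (SE_XE _ (D0_SE _ hD)).
- move=> hE Psi hPsi; rewrite !gVE.
  have hD : D Phi = 0 := SE_D0 _ (XE_SE _ (equi_XE _ hE)).
  rewrite hD add0r in k.
  have kk := key _ hPsi.
  rewrite -(ler_sqr : {in Num.nneg &, _}) ?nnegrE ?V_ge0 //.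
  have := lerMn2r 2 (V Psi ^+ 2) (V Phi ^+ 2); rewrite /= => <-.
  by rewrite k -kk lerDr D_ge0.
Qed.
End Gen.

Theorem corollary11 (R : realType) (M N : nat) (hN : (2 <= N)%N) :
  cor11_stmt (@radj R) (@rsqrt R) M N /\
  cor11_stmt (@cadj R) (@csqrt R) M N.
Proof.
split.
- apply: (@gen_cor11 R (idfun : {rmorphism R -> R})) => //.
  + by move=> x; rewrite real_normK ?num_real // expr2.
  + by move=> m n A; apply/matrixP => i j; rewrite !mxE.
  + by move=> x _; apply: sqrtr_ge0.
  + by move=> x hx; apply: sqr_sqrtr.
- apply: (@gen_cor11 R[i] (Num.conj : {rmorphism R[i] -> R[i]})) => //.
  all: try (by move=> x; rewrite normCK).
  all: try (by move=> m n A; apply/matrixP => i j; rewrite !mxE).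
  all: try (by move=> x hx; rewrite /csqrt sqrtC_ge0).
  all: try (by move=> x _; apply: sqrtCK).
  all: try exact: conjCK.
Qed.
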